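(* Let $(X,r)$ be a non-degenerate symmetric set, $S=S(X,r)$ its YB monoid, $G=G(X,r)$ its YB group, $(G,r_G)$ the associated symmetric group and $(G,+,\cdot)$ the associated left brace, and assume the canonical map $S\to G$ is injective (this holds automatically if $X$ is finite); identify $S$ with its image. Then: (1) $S$ is invariant under the left and the right actions of $G$ on itself (i.e. ${}^au\in S$ and $u^a\in S$ for $a\in G$, $u\in S$), so $r_G(S\times S)\subseteq S\times S$; (2) the restriction $r_S$ of $r_G$ to $S\times S$ makes $(S,r_S)$ a non-degenerate symmetric set; (3) $S$ is closed under $+$; $(S,\cdot)$ is a monoid with unit $1$, $(S,+)$ is an abelian monoid with the same neutral element $0=1$, isomorphic to the free abelian monoid on $X$; and $a(b+c)+a=ab+ac$ for all $a,b,c\in S$.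
   Context: A quadratic set $(X,r)$: $X$ nonempty, $r:X\times X\to X\times X$ bijective, $r(x,y)=({}^xy,x^y)$; non-degenerate if all $y\mapsto{}^xy$, $y\mapsto y^x$ are bijections; involutive if $r^2=\mathrm{id}$; braided if $r^{12}r^{23}r^{12}=r^{23}r^{12}r^{23}$ on $X^3$. A symmetric set (solution) is a non-degenerate involutive braided set. The YB monoid $S(X,r)$ (resp. YB group $G(X,r)$) is the monoid (resp. group) generated by $X$ with defining relations $xy=zt$ whenever $r(x,y)=(z,t)\neq(x,y)$; $X$ embeds in $G(X,r)$. A symmetric group is a pair $(G,\sigma)$, $G$ a group, $\sigma(u,v)=({}^uv,u^v)$ an involutive bijection of $G\times G$ with ${}^a1=1,{}^1u=u,1^u=1,a^1=a$, ${}^{ab}u={}^a({}^bu)$, $a^{uv}=(a^u)^v$, ${}^a(uv)=({}^au)({}^{a^u}v)$, $(ab)^u=(a^{{}^bu})(b^u)$, $uv=({}^uv)(u^v)$. The associated symmetric group $(G,r_G)$ of $(X,r)$ is $G=G(X,r)$ with the unique such involutive braiding $r_G$ whose restriction to $X\times X$ is $r$. The associated left brace is $(G,+,\cdot)$ with $a+b:=a({}^{a^{-1}}b)$. *)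

(* Defs.v *)
From Stdlib Require Import List Relations.
Import ListNotations.
Set Implicit Arguments.

Definition bij (A B : Type) (f : A -> B) : Prop :=
  exists g : B -> A, (forall x, g (f x) = x) /\ (forall y, f (g y) = y).

(* sigma (a,b) = ( ^a b , a^b ) *)
Definition lact (A : Type) (s : A * A -> A * A) (a b : A) : A := fst (s (a, b)).
Definition ract (A : Type) (s : A * A -> A * A) (a b : A) : A := snd (s (a, b)).

Definition nondegenerate (A : Type) (s : A * A -> A * A) : Prop :=
  forall x : A, bij (fun y => lact s x y) /\ bij (fun y => ract s y x).

Definition involutive2 (A : Type) (s : A * A -> A * A) : Prop :=
  forall p, s (s p) = p.

Definition r12 (A : Type) (s : A * A -> A * A) (p : A * A * A) : A * A * A :=
  let '(a, b, c) := p in let '(a', b') := s (a, b) in (a', b', c).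
Definition r23 (A : Type) (s : A * A -> A * A) (p : A * A * A) : A * A * A :=
  let '(a, b, c) := p in let '(b', c') := s (b, c) in (a, b', c').

Definition braided (A : Type) (s : A * A -> A * A) : Prop :=
  forall p, r12 s (r23 s (r12 s p)) = r23 s (r12 s (r23 s p)).

Definition symmetric_set (A : Type) (s : A * A -> A * A) : Prop :=
  inhabited A /\ bij s /\ nondegenerate s /\ involutive2 s /\ braided s.

Definition is_group (G : Type) (mul : G -> G -> G) (one : G) (inv : G -> G) : Prop :=
  (forall a b c, mul a (mul b c) = mul (mul a b) c) /\
  (forall a, mul one a = a) /\ (forall a, mul a one = a) /\
  (forall a, mul (inv a) a = one) /\ (forall a, mul a (inv a) = one).

Definition symmetric_group (G : Type) (mul : G -> G -> G) (one : G) (inv : G -> G)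
    (s : G * G -> G * G) : Prop :=
  bij s /\ involutive2 s /\
  (forall a, lact s a one = one) /\
  (forall u, lact s one u = u) /\
  (forall u, ract s one u = one) /\
  (forall a, ract s a one = a) /\
  (forall a b u, lact s (mul a b) u = lact s a (lact s b u)) /\
  (forall a u v, ract s a (mul u v) = ract s (ract s a u) v) /\
  (forall a u v, lact s a (mul u v) = mul (lact s a u) (lact s (ract s a u) v)) /\
  (forall a b u, ract s (mul a b) u = mul (ract s a (lact s b u)) (ract s b u)) /\
  (forall u v, mul u v = mul (lact s u v) (ract s u v)).

(* signed words: (true,x) = x, (false,x) = x^-1 *)
Definition geval (X G : Type) (mul : G -> G -> G) (one : G) (inv : G -> G)
    (iota : X -> G) (w : list (bool * X)) : G :=
  fold_right (fun (p : bool * X) (acc : G) => mul (if fst p then iota (snd p) else inv (iota (snd p))) acc) one w.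

(* elementary moves of the monoid presentation of the group
   < X u X^-1 | x x^-1 = 1, x^-1 x = 1, x y = z t when r(x,y)=(z,t) > *)
Inductive gstep (X : Type) (r : X * X -> X * X) : list (bool * X) -> list (bool * X) -> Prop :=
  | gstep_inv1 (u v : list (bool * X)) (x : X) : gstep r (u ++ [(true, x); (false, x)] ++ v) (u ++ v)
  | gstep_inv2 (u v : list (bool * X)) (x : X) : gstep r (u ++ [(false, x); (true, x)] ++ v) (u ++ v)
  | gstep_rel (u v : list (bool * X)) (x y : X) : gstep r (u ++ [(true, x); (true, y)] ++ v)
                                 (u ++ [(true, fst (r (x, y))); (true, snd (r (x, y)))] ++ v).

(* (G, iota) is the YB group G(X,r): generated by iota(X), and two signed words have
   equal value iff they are equal in the presented group. *)
Definition is_YB_group (X G : Type) (r : X * X -> X * X)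
    (mul : G -> G -> G) (one : G) (inv : G -> G) (iota : X -> G) : Prop :=
  (forall g, exists w, geval mul one inv iota w = g) /\
  (forall w1 w2, geval mul one inv iota w1 = geval mul one inv iota w2 <->
                 clos_refl_sym_trans _ (gstep r) w1 w2).

Inductive mstep (X : Type) (r : X * X -> X * X) : list X -> list X -> Prop :=
  | mstep_rel (u v : list X) (x y : X) : mstep r (u ++ [x; y] ++ v) (u ++ [fst (r (x, y)); snd (r (x, y))] ++ v).

(* image in G of a positive word (the canonical map S(X,r) -> G(X,r)) *)
Definition meval (X G : Type) (mul : G -> G -> G) (one : G) (iota : X -> G) (w : list X) : G :=
  fold_right (fun (x : X) (acc : G) => mul (iota x) acc) one w.

(* injectivity of S(X,r) -> G(X,r), S(X,r) = (list X)/(congruence generated by mstep) *)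
Definition canonical_map_injective (X G : Type) (r : X * X -> X * X)
    (mul : G -> G -> G) (one : G) (iota : X -> G) : Prop :=
  forall w1 w2 : list X, meval mul one iota w1 = meval mul one iota w2 ->
                         clos_refl_sym_trans _ (mstep r) w1 w2.

Definition inS (X G : Type) (mul : G -> G -> G) (one : G) (iota : X -> G) (g : G) : Prop :=
  exists w : list X, meval mul one iota w = g.

Definition badd (G : Type) (mul : G -> G -> G) (inv : G -> G) (s : G * G -> G * G)
    (a b : G) : G := mul a (lact s (inv a) b).

(* finitely supported multiplicity functions: the free abelian monoid on X *)
Definition fin_supp (X : Type) (m : X -> nat) : Prop :=
  exists l : list X, forall x, m x <> 0 -> In x l.

(* Main.v *)
Require Import Defs.
From Stdlib Require Import List Relations.
From Stdlib Require Import Permutation Classical ClassicalEpsilon ProofIrrelevance Lia.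
Import ListNotations.

Lemma grp_cancel {G} {mul : G -> G -> G} {one inv} :
  is_group mul one inv -> forall a b c, mul a b = mul a c -> b = c.
Proof.
  intros (As & L1 & R1 & LI & RI) a b c H.
  rewrite <- (L1 b), <- (L1 c), <- (LI a), <- !As, H. reflexivity.
Qed.

Lemma grp_inv1 {G} {mul : G -> G -> G} {one inv} :
  is_group mul one inv -> inv one = one.
Proof.
  intros HG. pose proof HG as (As & L1 & R1 & LI & RI).
  rewrite <- (L1 (inv one)). apply RI.
Qed.

Lemma grp_invM {G} {mul : G -> G -> G} {one inv} :
  is_group mul one inv -> forall a b, inv (mul a b) = mul (inv b) (inv a).
Proof.
  intros HG a b. pose proof HG as (As & L1 & R1 & LI & RI).
  apply (grp_cancel HG (mul a b)).
  rewrite RI, <- As, (As b), RI, L1, RI. reflexivity.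
Qed.

Section dummy. End dummy.

Lemma s_pair {G} (s : G * G -> G * G) u v : s (u, v) = (lact s u v, ract s u v).
Proof. unfold lact, ract. destruct (s (u, v)); reflexivity. Qed.

Lemma sg_facts {G} {mul : G -> G -> G} {one inv s} :
  is_group mul one inv -> symmetric_group mul one inv s ->
  (forall a u, lact s (inv a) (lact s a u) = u) /\
  (forall a u, lact s a (lact s (inv a) u) = u) /\
  (forall u v, lact s (lact s u v) (ract s u v) = u) /\
  (forall u v, ract s (lact s u v) (ract s u v) = v).
Proof.
  intros HG HS. pose proof HG as (As & L1 & R1 & LI & RI).
  destruct HS as (Sb & Sinv & La1 & L1u & R1u & Ra1 & Lmul & Rmul & Lmul2 & Rmul2 & Mdec).
  repeat split; intros.
  - rewrite <- Lmul, LI, L1u. reflexivity.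
  - rewrite <- Lmul, RI, L1u. reflexivity.
  - unfold lact, ract.
    rewrite <- surjective_pairing, Sinv. reflexivity.
  - unfold lact, ract.
    rewrite <- surjective_pairing, Sinv. reflexivity.
Qed.

Lemma brace_facts {G} {mul : G -> G -> G} {one inv s} :
  is_group mul one inv -> symmetric_group mul one inv s ->
  let add := badd mul inv s in
  (forall a b, add a b = add b a) /\
  (forall a b c, lact s a (add b c) = add (lact s a b) (lact s a c)) /\
  (forall a b c, add a (add b c) = add (add a b) c) /\
  (forall a, add one a = a) /\ (forall a, add a one = a) /\
  (forall a b, add a (lact s a b) = mul a b).
Proof.
  intros HG HS add. pose proof HG as (As & L1 & R1 & LI & RI).
  pose proof (sg_facts HG HS) as (LiL & LLi & InvL & InvR).
  pose proof HS as (Sb & Sinv & La1 & L1u & R1u & Ra1 & Lmul & Rmul & Lmul2 & Rmul2 & Mdec).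
  assert (Hlin : forall a b c, lact s a (add b c) = add (lact s a b) (lact s a c)).
  { intros a b c. unfold add, badd. rewrite Lmul2. f_equal.
    set (d := lact s (inv b) c).
    assert (c = lact s b d) by (unfold d; rewrite LLi; reflexivity).
    rewrite H, <- (Lmul a b), (Mdec a b), Lmul, LiL. reflexivity. }
  repeat split.
  - intros a b. unfold add, badd.
    set (c := lact s (inv a) b).
    rewrite (Mdec a c).
    assert (E : lact s a c = b) by (unfold c; apply LLi).
    pose proof (InvL a c) as E2. rewrite E in E2 |- *.
    f_equal. transitivity (lact s (inv b) (lact s b (ract s a c))).
    symmetry; apply LiL. rewrite E2; reflexivity.
  - exact Hlin.
  - intros a b c. unfold add at 1. unfold badd at 1.
    rewrite Hlin. fold add.
    set (b' := lact s (inv a) b).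
    assert (add a b = mul a b') by reflexivity.
    rewrite H. unfold add, badd.
    rewrite (grp_invM HG), Lmul, As. reflexivity.
  - intros a. unfold add, badd. rewrite (grp_inv1 HG), L1, L1u. reflexivity.
  - intros a. unfold add, badd. rewrite La1, R1. reflexivity.
  - intros a b. unfold add, badd. rewrite LiL. reflexivity.
Qed.

Fixpoint ys {X} (r : X * X -> X * X) (w : list X) : list X :=
  match w with [] => [] | x :: w' => x :: map (lact r x) (ys r w') end.

Lemma ys_mstep {X} (r : X * X -> X * X) :
  involutive2 r -> braided r -> forall w1 w2, mstep r w1 w2 -> Permutation (ys r w1) (ys r w2).
Proof.
  intros Hinv Hbr w1 w2 H. destruct H as [u v x y].
  induction u as [|a u IH]; simpl.
  - set (z := fst (r (x, y))). set (t := snd (r (x, y))).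
    assert (E1 : lact r x y = z) by reflexivity.
    assert (E2 : lact r z t = x).
    { unfold lact, z, t. rewrite <- surjective_pairing, Hinv. reflexivity. }
    assert (E3 : forall c, lact r x (lact r y c) = lact r z (lact r t c)).
    { intros c. pose proof (Hbr (x, y, c)) as B. unfold r12, r23 in B.
      unfold lact, z, t.
      destruct (r (x, y)) as [z0 t0] eqn:Exy. simpl.
      destruct (r (t0, c)) as [t1 c1] eqn:Etc.
      destruct (r (z0, t1)) as [z2 t2] eqn:Ezt.
      destruct (r (y, c)) as [y3 c3] eqn:Eyc.
      destruct (r (x, y3)) as [x4 y4] eqn:Exy3.
      destruct (r (y4, c3)) as [y5 c5] eqn:Eyc5.
      simpl. rewrite ?Eyc, ?Exy3, ?Etc, ?Ezt. simpl. inversion B. congruence. }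
    rewrite E1, E2, !map_map.
    rewrite (map_ext _ _ E3).
    apply perm_swap.
  - apply perm_skip. apply Permutation_map. exact IH.
Qed.

Lemma ys_crst {X} (r : X * X -> X * X) :
  involutive2 r -> braided r -> forall w1 w2,
  clos_refl_sym_trans _ (mstep r) w1 w2 -> Permutation (ys r w1) (ys r w2).
Proof.
  intros Hi Hb w1 w2 H. induction H.
  - apply ys_mstep; auto.
  - apply Permutation_refl.
  - apply Permutation_sym; auto.
  - eapply perm_trans; eauto.
Qed.

Lemma ys_surj {X} (r : X * X -> X * X) :
  nondegenerate r -> forall l, exists w, ys r w = l.
Proof.
  intros Hnd.
  assert (forall n l, length l = n -> exists w, ys r w = l).
  { induction n as [|n IH]; intros l Hl.
    - destruct l; [exists []; reflexivity | discriminate].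
    - destruct l as [|y l]; [discriminate|].
      destruct (proj1 (Hnd y)) as [g [Hg1 Hg2]].
      destruct (IH (map g l)) as [w Hw].
      + rewrite length_map. simpl in Hl. congruence.
      + exists (y :: w). simpl. rewrite Hw, map_map.
        f_equal. rewrite (map_ext _ (fun z => z)). apply map_id.
        intros z. apply Hg2. }
  intros l. eapply H. reflexivity.
Qed.

Definition xdec {X : Type} (x y : X) : {x = y} + {x <> y} :=
  excluded_middle_informative (x = y).

Definition fmult {X G} (r : X * X -> X * X) (mul : G -> G -> G) (one : G) (iota : X -> G)
  (a : G) (x : X) : nat :=
  match excluded_middle_informative (inS mul one iota a) with
  | left H => count_occ xdec (ys r (proj1_sig (constructive_indefinite_description _ H))) x
  | right _ => 0
  end.

Lemma fmult_spec {X G} (r : X * X -> X * X) {mul : G -> G -> G} {one : G} {iota : X -> G} {a} :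
  inS mul one iota a ->
  exists w, meval mul one iota w = a /\ forall x, fmult r mul one iota a x = count_occ xdec (ys r w) x.
Proof.
  intros H. unfold fmult. destruct (excluded_middle_informative _) as [H'|n].
  - exists (proj1_sig (constructive_indefinite_description _ H')). split.
    + exact (proj2_sig (constructive_indefinite_description _ H')).
    + reflexivity.
  - contradiction.
Qed.

Lemma sig_ext {A} (P : A -> Prop) (p q : {x | P x}) : proj1_sig p = proj1_sig q -> p = q.
Proof.
  destruct p, q; simpl; intros; subst. f_equal. apply proof_irrelevance.
Qed.

Lemma count_build {X} (m : X -> nat) (l0 : list X) :
  (forall x, m x <> 0 -> In x l0) -> exists L, forall x, count_occ xdec L x = m x.
Proof.
  revert m. induction l0 as [|y l0 IH]; intros m Hm.
  - exists []. intros x. simpl. destruct (m x) eqn:E; auto. exfalso; apply (Hm x); congruence.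
  - set (m' := fun x => if xdec x y then 0 else m x).
    destruct (IH m') as [L HL].
    { intros x Hx. unfold m' in Hx. destruct (xdec x y); [congruence|].
      destruct (Hm x Hx); [congruence|auto]. }
    exists (repeat y (m y) ++ L). intros x. rewrite count_occ_app, HL. unfold m'.
    destruct (xdec x y) as [e|ne].
    + subst. rewrite count_occ_repeat_eq; auto.
    + rewrite count_occ_repeat_neq; auto.
Qed.
Theorem mainTheorem3 (X : Type) (r : X * X -> X * X)
    (G : Type) (mul : G -> G -> G) (one : G) (inv : G -> G) (iota : X -> G)
    (rG : G * G -> G * G) :
  symmetric_set r ->
  is_group mul one inv ->
  is_YB_group r mul one inv iota ->
  symmetric_group mul one inv rG ->
  (forall x y, rG (iota x, iota y) = (iota (fst (r (x, y))), iota (snd (r (x, y))))) ->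
  canonical_map_injective r mul one iota ->
  let S := inS mul one iota in
  let add := badd mul inv rG in
  (* (1) *)
  ((forall a u, S u -> S (lact rG a u) /\ S (ract rG u a)) /\
   (forall u v, S u -> S v -> S (fst (rG (u, v))) /\ S (snd (rG (u, v))))) /\
  (* (2) *)
  (exists rS : {g : G | S g} * {g : G | S g} -> {g : G | S g} * {g : G | S g},
     (forall p q, proj1_sig (fst (rS (p, q))) = fst (rG (proj1_sig p, proj1_sig q)) /\
                  proj1_sig (snd (rS (p, q))) = snd (rG (proj1_sig p, proj1_sig q))) /\
     symmetric_set rS) /\
  (* (3) *)
  ((forall a b, S a -> S b -> S (add a b)) /\
   (S one /\ forall a b, S a -> S b -> S (mul a b)) /\
   (forall a b c, S a -> S b -> S c -> add a (add b c) = add (add a b) c) /\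
   (forall a b, S a -> S b -> add a b = add b a) /\
   (forall a, S a -> add one a = a /\ add a one = a) /\
   (exists f : G -> (X -> nat),
      (forall a, S a -> fin_supp (f a)) /\
      (forall a b, S a -> S b -> (forall x, f a x = f b x) -> a = b) /\
      (forall m, fin_supp m -> exists a, S a /\ forall x, f a x = m x) /\
      (forall x, f one x = 0) /\
      (forall a b x, S a -> S b -> f (add a b) x = f a x + f b x)) /\
   (forall a b c, S a -> S b -> S c ->
      add (mul a (add b c)) a = add (mul a b) (mul a c))).
Proof.
  intros Hr HG HYB HSG HX Hinj S add. subst S add.
  destruct Hr as (Hinh & Hbij & Hnd & Hinv & Hbr).
  pose proof HG as (As & L1 & R1 & LI & RI).
  pose proof (sg_facts HG HSG) as (LiL & LLi & InvL & InvR).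
  pose proof HSG as (Sb & Sinv & La1 & L1u & R1u & Ra1 & Lmul & Rmul & Lmul2 & Rmul2 & Mdec).
  pose proof (brace_facts HG HSG) as BF. cbv zeta in BF.
  destruct BF as (Acomm & Alin & Aassoc & A1l & A1r & AL).
  assert (Happ : forall w1 w2, meval mul one iota (w1 ++ w2) =
                  mul (meval mul one iota w1) (meval mul one iota w2)).
  { induction w1 as [|x w1 IH]; intros w2; simpl.
    - rewrite L1. reflexivity.
    - rewrite IH, As. reflexivity. }
  assert (Smul : forall a b, inS mul one iota a -> inS mul one iota b -> inS mul one iota (mul a b)).
  { intros a b [wa Ha] [wb Hb]. exists (wa ++ wb). rewrite Happ; congruence. }
  assert (Sone : inS mul one iota one) by (exists []; reflexivity).
  assert (lamW : forall w x, exists y, lact rG (geval mul one inv iota w) (iota x) = iota y).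
  { induction w as [|[b z] w IH]; intros x; simpl.
    - exists x. apply L1u.
    - destruct (IH x) as [y Hy]. rewrite Lmul, Hy. destruct b.
      + exists (fst (r (z, y))). unfold lact at 1. rewrite HX. reflexivity.
      + destruct (proj1 (Hnd z)) as [g [Hg1 Hg2]].
        exists (g y). rewrite <- (Hg2 y) at 1.
        assert (E : iota (lact r z (g y)) = lact rG (iota z) (iota (g y))).
        { unfold lact. rewrite HX. reflexivity. }
        rewrite E, LiL. reflexivity. }
  assert (lamX : forall g x, exists y, lact rG g (iota x) = iota y).
  { intros g x. destruct (proj1 HYB g) as [w Hw]. rewrite <- Hw. apply lamW. }
  assert (SLw : forall w g, inS mul one iota (lact rG g (meval mul one iota w))).
  { induction w as [|x w IH]; intros g; simpl.
    - rewrite La1. exact Sone.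
    - rewrite Lmul2. destruct (lamX g x) as [y Hy]. rewrite Hy.
      destruct (IH (ract rG g (iota x))) as [w' Hw']. exists (y :: w'). simpl. congruence. }
  assert (SL : forall g u, inS mul one iota u -> inS mul one iota (lact rG g u)).
  { intros g u [w Hw]. rewrite <- Hw. apply SLw. }
  assert (Req : forall u a, ract rG u a = lact rG (inv (lact rG u a)) u).
  { intros u a. transitivity (lact rG (inv (lact rG u a)) (lact rG (lact rG u a) (ract rG u a))).
    - symmetry. apply LiL.
    - rewrite InvL. reflexivity. }
  assert (SR : forall u a, inS mul one iota u -> inS mul one iota (ract rG u a)).
  { intros u a Hu. rewrite Req. apply SL; auto. }
  assert (Sadd : forall a b, inS mul one iota a -> inS mul one iota b ->
                  inS mul one iota (badd mul inv rG a b)).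
  { intros a b Ha Hb. unfold badd. apply Smul; auto. }
  assert (Br1 : forall a b c, lact rG (lact rG a b) (lact rG (ract rG a b) c) = lact rG a (lact rG b c)).
  { intros a b c. rewrite <- Lmul, <- Mdec, Lmul. reflexivity. }
  assert (Br3 : forall a b c, ract rG (ract rG a b) c = ract rG (ract rG a (lact rG b c)) (ract rG b c)).
  { intros a b c. rewrite <- !Rmul, <- Mdec. reflexivity. }
  assert (Br2 : forall a b c, ract rG (lact rG a b) (lact rG (ract rG a b) c) =
                             lact rG (ract rG a (lact rG b c)) (ract rG b c)).
  { intros a b c. apply (grp_cancel HG (lact rG a (lact rG b c))).
    rewrite <- Br1 at 1. rewrite <- Mdec, <- Lmul2.
    rewrite <- Lmul2, <- Mdec. reflexivity. }
  set (bs := fun l => fold_right (badd mul inv rG) one l).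
  assert (bL : forall g l, lact rG g (bs l) = bs (map (lact rG g) l)).
  { intros g l. induction l as [|x l IH]; simpl.
    - apply La1.
    - rewrite Alin. f_equal. exact IH. }
  assert (bapp : forall l1 l2, bs (l1 ++ l2) = badd mul inv rG (bs l1) (bs l2)).
  { induction l1 as [|x l1 IH]; intros l2; simpl.
    - rewrite A1l. reflexivity.
    - rewrite <- Aassoc. f_equal. apply IH. }
  assert (bperm : forall l1 l2, Permutation l1 l2 -> bs l1 = bs l2).
  { intros l1 l2 H. induction H; simpl in *; try congruence.
    all: rewrite !Aassoc, (Acomm y x); reflexivity. }
  assert (mys : forall w, meval mul one iota w = bs (map iota (ys r w))).
  { induction w as [|x w IH]; simpl.
    - reflexivity.
    - rewrite <- AL, IH, bL, !map_map. f_equal. f_equal.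
      apply map_ext. intros y. unfold lact. rewrite HX. reflexivity. }
  assert (Hperm : forall w1 w2, meval mul one iota w1 = meval mul one iota w2 ->
                   Permutation (ys r w1) (ys r w2)).
  { intros w1 w2 H. apply ys_crst; auto. }
  assert (Hword : forall l, exists w, meval mul one iota w = bs (map iota l) /\ ys r w = l).
  { intros l. destruct (ys_surj r Hnd l) as [w Hw]. exists w. rewrite mys, Hw. auto. }
  split; [split|split].
  - intros a u Hu. split; auto.
  - intros u v Hu Hv. split; [apply SL|apply SR]; auto.
  - set (PL := fun p q : {g | inS mul one iota g} =>
                 SL (proj1_sig p) (proj1_sig q) (proj2_sig q)).
    set (PR := fun p q : {g | inS mul one iota g} =>
                 SR (proj1_sig p) (proj1_sig q) (proj2_sig p)).
    exists (fun pq => (exist _ (lact rG (proj1_sig (fst pq)) (proj1_sig (snd pq))) (PL (fst pq) (snd pq)),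
                       exist _ (ract rG (proj1_sig (fst pq)) (proj1_sig (snd pq))) (PR (fst pq) (snd pq)))).
    split.
    { intros p q. split; reflexivity. }
    assert (Hinvol : forall p, (fun pq : {g | inS mul one iota g} * {g | inS mul one iota g} =>
        (exist _ (lact rG (proj1_sig (fst pq)) (proj1_sig (snd pq))) (PL (fst pq) (snd pq)),
         exist _ (ract rG (proj1_sig (fst pq)) (proj1_sig (snd pq))) (PR (fst pq) (snd pq))))
        ((fun pq : {g | inS mul one iota g} * {g | inS mul one iota g} =>
        (exist _ (lact rG (proj1_sig (fst pq)) (proj1_sig (snd pq))) (PL (fst pq) (snd pq)),
         exist _ (ract rG (proj1_sig (fst pq)) (proj1_sig (snd pq))) (PR (fst pq) (snd pq)))) p) = p).
    { intros [p q]. cbn. f_equal; apply sig_ext; cbn; [apply InvL|apply InvR]. }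
    split; [|split; [|split; [|split]]].
    + constructor. exact (exist _ one Sone).
    + eexists. split; exact Hinvol.
    + intros x. split.
      * exists (fun y => exist _ (lact rG (inv (proj1_sig x)) (proj1_sig y)) (SL _ _ (proj2_sig y))).
        split; intros y; apply sig_ext; unfold lact at 1; cbn; fold (lact rG); [apply LiL|apply LLi].
      * exists (fun y => exist _ (ract rG (proj1_sig y) (inv (proj1_sig x))) (SR _ _ (proj2_sig y))).
        split; intros y; apply sig_ext; unfold ract at 1; cbn; fold (ract rG);
          rewrite ?(fun a b => eq_refl : snd (rG (a, b)) = ract rG a b), <- Rmul, ?RI, ?LI; apply Ra1.
    + exact Hinvol.
    + intros [[a b] c]. unfold r12, r23. cbn.
      f_equal; [f_equal|]; apply sig_ext; cbn; [apply Br1|apply Br2|apply Br3].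
  - split; [exact Sadd|].
    split; [split; [exact Sone|exact Smul]|].
    split; [intros; apply Aassoc|].
    split; [intros; apply Acomm|].
    split; [intros; split; [apply A1l|apply A1r]|].
    split.
    + exists (fmult r mul one iota).
      split; [|split; [|split; [|split]]].
      * intros a Ha. destruct (fmult_spec r Ha) as [w [Hw Hf]].
        exists (ys r w). intros x Hx. rewrite Hf in Hx.
        apply (proj2 (count_occ_In xdec _ _)). lia.
      * intros a b Ha Hb Hab.
        destruct (fmult_spec r Ha) as [wa [Hwa Hfa]].
        destruct (fmult_spec r Hb) as [wb [Hwb Hfb]].
        assert (P : Permutation (ys r wa) (ys r wb)).
        { apply (Permutation_count_occ xdec). intros x. rewrite <- Hfa, <- Hfb. apply Hab. }
        rewrite <- Hwa, <- Hwb, !mys. apply bperm. apply Permutation_map. exact P.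
      * intros m [l0 Hl0]. destruct (count_build m l0 Hl0) as [L HL].
        destruct (Hword L) as [w [Hw HwL]].
        exists (meval mul one iota w). split; [exists w; reflexivity|].
        intros x. destruct (fmult_spec r (ex_intro _ w eq_refl : inS mul one iota (meval mul one iota w)))
          as [w' [Hw' Hf]].
        rewrite Hf, <- HL, <- HwL. apply (Permutation_count_occ xdec). apply Hperm. exact Hw'.
      * intros x. destruct (fmult_spec r Sone) as [w [Hw Hf]].
        rewrite Hf. assert (P : Permutation (ys r w) (ys r [])) by (apply Hperm; exact Hw).
        rewrite (proj1 (Permutation_count_occ xdec _ _) P). reflexivity.
      * intros a b x Ha Hb.
        destruct (fmult_spec r Ha) as [wa [Hwa Hfa]].
        destruct (fmult_spec r Hb) as [wb [Hwb Hfb]].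
        destruct (fmult_spec r (Sadd a b Ha Hb)) as [wc [Hwc Hfc]].
        destruct (Hword (ys r wa ++ ys r wb)) as [w [Hw HwL]].
        rewrite Hfa, Hfb, Hfc, <- count_occ_app, <- HwL.
        apply (Permutation_count_occ xdec). apply Hperm.
        rewrite Hwc, Hw, map_app, bapp, <- !mys, Hwa, Hwb. reflexivity.
    + intros a b c Ha Hb Hc.
      rewrite <- (AL a (badd mul inv rG b c)), <- (AL a b), <- (AL a c), Alin.
      set (p := lact rG a b). set (q := lact rG a c).
      rewrite !Aassoc. rewrite <- (Aassoc (badd mul inv rG a p) q a), (Acomm q a), Aassoc.
      reflexivity.
Qed.
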